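(* Let $\Gamma$ be a splice diagram satisfying the edge determinant condition and let $a,b$ be two adjacent nodes of $\Gamma$. Let $P_a$ (resp. $P_b$) be the set of leaves $\lambda$ of $\Gamma$ with $a\in[\lambda,b]$ (resp. $b\in[\lambda,a]$). Then: (1) $\beta^{a}_{P_a}=\beta^{b}_{P_a}$ and $\beta^{a}_{P_b}=\beta^{b}_{P_b}$; denote these points $\beta_{P_a}$ and $\beta_{P_b}$. (2) The points $\rho(a)$ and $\rho(b)$ lie on the segment $[\beta_{P_a},\beta_{P_b}]$. (3) Identifying this segment with $[0,1]$ via $\beta_{P_a}\mapsto0$, $\beta_{P_b}\mapsto1$, we have $\beta_{P_a}<\rho(a)<\rho(b)<\beta_{P_b}$.
   Context: A splice diagram is a finite tree $\Gamma$ with at least one vertex of valency $\geq3$ and no vertex of valency $2$; vertices of valency $1$ are leaves, others nodes. For each node $v$ and edge $e$ at $v$ a positive integer weight $d_{v,e}$ is given; $d_v=\prod_{e\ni v}d_{v,e}$; $d_{v,u}$ is the weight at $v$ of the edge toward $u$. For distinct vertices $u,v$, $\ell_{u,v}$ is the product of all $d_{w,e}$ with $w$ a node on the geodesic $[u,v]$ and $e$ an edge at $w$ not in $[u,v]$. Edge determinant condition: $d_{u,v}d_{v,u}>\ell_{u,v}$ for every edge $[u,v]$ between nodes. With $n$ leaves, let $(e_\lambda)$ be the standard basis of $\mathbb{R}^n$ indexed by leaves, $w_\lambda=e_\lambda$, and $w_u=\sum_\lambda\ell_{u,\lambda}e_\lambda$ for a node $u$. Set $\rho(u)=w_u/|w_u|$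 ($|\cdot|$ the $1$-norm) for every vertex $u$. For a node $v$ and a set $L$ of leaves, the barycenter is $\beta^v_L=\sum_{\lambda\in L}\frac{\ell_{v,\lambda}}{\ell}e_\lambda$ with $\ell=\sum_{\lambda\in L}\ell_{v,\lambda}$. *)

(* Defs.v *)
From HB Require Import structures.
From mathcomp Require Import all_boot all_order all_algebra.
From mathcomp Require Import boolp.
Set Implicit Arguments. Unset Strict Implicit. Unset Printing Implicit Defensive.
Import Order.TTheory GRing.Theory Num.Theory.
Local Open Scope ring_scope.

Section SpliceDefs.
Variable V : finType.
Variable adj : rel V.

Definition valency (v : V) : nat := #|[set x | adj v x]|.
Definition leaf (v : V) : bool := valency v == 1%N.
Definition node (v : V) : bool := ~~ leaf v.

(* simple path u = x0, x1, ..., xk = v (given by its tail p) *)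
Definition gpath (u v : V) (p : seq V) : bool :=
  [&& path adj u p, last u p == v & uniq (u :: p)].

Definition on_geod (u v w : V) : bool :=
  `[< exists p, gpath u v p && (w \in u :: p) >].

Definition edge_on (u v w x : V) : bool :=
  `[< exists p, gpath u v p &&
        (((w, x) \in zip (u :: p) p) || ((x, w) \in zip (u :: p) p)) >].

Variable d : V -> V -> nat. (* d v x = weight at node v of edge [v,x] *)

Definition splice_diagram : Prop :=
  [/\ symmetric adj /\ irreflexive adj,
      (forall u v : V, exists! p, gpath u v p),
      (exists v, 3 <= valency v)%N,
      (forall v, valency v != 2%N) &
      (forall v x, node v -> adj v x -> 0 < d v x)%N].

Definition ell (u v : V) : nat :=
  (\prod_(w | node w && on_geod u v w)
     \prod_(x | adj w x && ~~ edge_on u v w x) d w x)%N.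

Definition edge_det : Prop :=
  forall u v, node u -> node v -> adj u v -> (ell u v < d u v * d v u)%N.

Variable R : realFieldType.

(* points of R^n, n = number of leaves: coordinates indexed by leaves,
   (non-leaf coordinates are set to 0) *)
Definition wvec (u : V) : {ffun V -> R} :=
  [ffun l => if leaf l then
               (if leaf u then (l == u)%:R else (ell u l)%:R) else 0].

Definition norm1 (f : {ffun V -> R}) : R := \sum_(l | leaf l) `|f l|.

Definition rho (u : V) : {ffun V -> R} :=
  [ffun l => wvec u l / norm1 (wvec u)].

Definition segpt (t : R) (p q : {ffun V -> R}) : {ffun V -> R} :=
  [ffun l => (1 - t) * p l + t * q l].

Definition bary (v : V) (L : {set V}) : {ffun V -> R} :=
  [ffun l => if (l \in L) && leaf l then
               (ell v l)%:R / (\sum_(m in L | leaf m) (ell v m)%:R) else 0].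

End SpliceDefs.

(* Main.v *)
Require Import Defs.
From HB Require Import structures.
From mathcomp Require Import all_boot all_order all_algebra.
From mathcomp Require Import boolp.
From mathcomp Require Import ring lra.
Set Implicit Arguments. Unset Strict Implicit. Unset Printing Implicit Defensive.
Import Order.TTheory GRing.Theory Num.Theory.

Section Graph.
Variable V : finType.
Variable adj : rel V.
Hypothesis Hsym : symmetric adj.
Hypothesis Hirr : irreflexive adj.
Hypothesis Huniq : forall u v : V, exists! p, gpath adj u v p.

Lemma gpath_uniq u v p q : gpath adj u v p -> gpath adj u v q -> p = q.
Proof. move=> hp hq; have [r [_ hr]] := Huniq u v. by rewrite -(hr p hp); apply: hr. Qed.

Lemma ex_gp u v : exists p, gpath adj u v p.
Proof. by have [r [hr _]] := Huniq u v; exists r. Qed.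

Definition gp u v : seq V := xchoose (ex_gp u v).
Lemma gpP u v : gpath adj u v (gp u v).
Proof. exact: xchooseP. Qed.
Lemma gpE u v p : gpath adj u v p -> gp u v = p.
Proof. by move=> h; apply: gpath_uniq (gpP u v) h. Qed.

Lemma on_geodE u v w : on_geod adj u v w = (w \in u :: gp u v).
Proof.
apply/asboolP/idP => [[p /andP[hp hw]]|hw]; first by rewrite (gpE hp).
by exists (gp u v); rewrite gpP.
Qed.

Lemma edge_onE u v w x : edge_on adj u v w x =
  ((w, x) \in zip (u :: gp u v) (gp u v)) || ((x, w) \in zip (u :: gp u v) (gp u v)).
Proof.
apply/asboolP/idP => [[p /andP[hp hw]]|hw]; first by rewrite (gpE hp).
by exists (gp u v); rewrite gpP.
Qed.

Lemma mem_zipP (x y : V) s t : (x, y) \in zip s t -> (x \in s) && (y \in t).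
Proof.
elim: s t => [|a s IH] [|b t] //=.
rewrite in_cons => /orP[/eqP[-> ->]|/IH /andP[h1 h2]]; first by rewrite !mem_head.
by rewrite !in_cons h1 h2 !orbT.
Qed.

Lemma gpath_rev u v p : gpath adj u v p -> gpath adj v u (rev (belast u p)).
Proof.
case/and3P=> hp /eqP hl hu.
have E : last u p :: rev (belast u p) = rev (u :: p) by rewrite [u :: _]lastI rev_rcons.
apply/and3P; split.
- rewrite -hl rev_path. by rewrite (@eq_path _ _ adj) // => x y; rewrite Hsym.
- have := congr1 (last v) E; rewrite /= rev_cons last_rcons hl => ->. by [].
- by rewrite -hl E rev_uniq.
Qed.

Lemma on_geod_sym u v w : on_geod adj u v w = on_geod adj v u w.
Proof.
rewrite !on_geodE (gpE (gpath_rev (gpP u v))).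
have /and3P[_ /eqP hl _] := gpP u v.
have E : last u (gp u v) :: rev (belast u (gp u v)) = rev (u :: gp u v)
  by rewrite [u :: _]lastI rev_rcons.
by rewrite -{2}hl E mem_rev.
Qed.

Lemma gpath_split u v p w : gpath adj u v p -> w \in u :: p ->
  exists p1 p2, [/\ p = p1 ++ p2, gpath adj u w p1 & gpath adj w v p2].
Proof.
move=> h; rewrite in_cons => /orP[/eqP->|hw].
  by exists [::], p; split => //; rewrite /gpath /= eqxx.
case: (path.splitP hw) h => p1 p2 /and3P[hp hl hu].
exists (rcons p1 w), p2; split => //.
- move: hp; rewrite cat_path => /andP[h1 _].
  move: hu; rewrite -cat_cons cat_uniq => /and3P[h3 _ _].
  by rewrite /gpath h1 last_rcons eqxx -rcons_cons h3.
- move: hp; rewrite cat_path last_rcons => /andP[_ h2].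
  move: hl; rewrite last_cat last_rcons => hl.
  move: hu; rewrite -cat_cons cat_uniq => /and3P[_ h4 h5].
  rewrite /gpath h2 hl /= h5 andbT.
  apply: contra h4 => hw2; apply/hasP; exists w => //.
  by rewrite -rcons_cons mem_rcons mem_head.
Qed.

Lemma gpath_adj u v : adj u v -> gpath adj u v [:: v].
Proof.
move=> h; rewrite /gpath /= h eqxx /= in_cons orbF andbT.
by apply: contraTneq h => ->; rewrite Hirr.
Qed.

Lemma gp_refl u : gp u u = [::].
Proof. by apply: gpE; rewrite /gpath /= eqxx. Qed.

Lemma gp_adj a b l : adj a b -> on_geod adj l b a -> gp b l = a :: gp a l.
Proof.
move=> hab; rewrite on_geod_sym on_geodE => h.
have [p1 [p2 [E h1 h2]]] := gpath_split (gpP b l) h.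
have hba : adj b a by rewrite Hsym.
by rewrite E (gpath_uniq h1 (gpath_adj hba)) (gpE h2).
Qed.

Lemma gp_adjE a b l : gp b l = a :: gp a l -> on_geod adj l b a.
Proof. by move=> h; rewrite on_geod_sym on_geodE h in_cons mem_head orbT. Qed.

Lemma gp_dich a b l : adj a b -> (gp b l = a :: gp a l) \/ (gp a l = b :: gp b l).
Proof.
move=> hab; case: (boolP (a \in b :: gp b l)) => h.
  by left; apply: gp_adj => //; rewrite on_geod_sym on_geodE.
right; apply: gpE; have /and3P[hp hl hu] := gpP b l.
by rewrite /gpath /= hab hp hl /= h.
Qed.

End Graph.
Section Ell.
Variable V : finType.
Variable adj : rel V.
Hypothesis Hsym : symmetric adj.
Hypothesis Hirr : irreflexive adj.
Hypothesis Huniq : forall u v : V, exists! p, gpath adj u v p.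
Variable d : V -> V -> nat.

Local Notation gp := (gp Huniq).
Definition Gf u l w := (\prod_(x | adj w x && ~~ edge_on adj u l w x) d w x)%N.

Lemma ell_step u v l : node adj u -> node adj v -> adj u v ->
  gp u l = v :: gp v l ->
  (ell adj d u l * d v u = ell adj d v l * \prod_(x | adj u x && (x != v)) d u x)%N.
Proof.
move=> nu nv huv h.
have huv' : u != v by apply: contraTneq huv => ->; rewrite Hirr.
have hvu : adj v u by rewrite Hsym.
have hu : u \notin v :: gp v l.
  by have /and3P[_ _] := gpP Huniq u l; rewrite h => /andP[].
have onE w : on_geod adj u l w = (w == u) || on_geod adj v l w.
  by rewrite !on_geodE h in_cons.
have edE w x : edge_on adj u l w x =
   [|| (w, x) == (u, v), (x, w) == (u, v) | edge_on adj v l w x].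
  by rewrite !edge_onE h /= !in_cons -orbA; congr (_ || _); rewrite orbCA.
have edu x : edge_on adj v l u x = false.
  rewrite edge_onE; apply/negbTE; apply/negP => /orP[] /mem_zipP /andP[h1 h2].
    by rewrite h1 in hu.
  by move: hu; rewrite in_cons h2 orbT.
have edu' x : edge_on adj v l x u = false.
  rewrite edge_onE; apply/negbTE; apply/negP => /orP[] /mem_zipP /andP[h1 h2].
    by move: hu; rewrite in_cons h2 orbT.
  by rewrite h1 in hu.
have onv : on_geod adj v l v by rewrite on_geodE mem_head.
have Gw w : w != u -> w != v -> Gf u l w = Gf v l w.
  move=> h1 h2; apply: eq_bigl => x; rewrite edE !xpair_eqE.
  by rewrite (negbTE h1) (negbTE h2) !andbF.
have ellE u' l' : ell adj d u' l' = (\prod_(w | node adj w && on_geod adj u' l' w) Gf u' l' w)%N by [].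
rewrite !ellE.
rewrite (bigD1 u) /=; last by rewrite nu onE eqxx.
rewrite (eq_bigl (fun w => node adj w && on_geod adj v l w)); last first.
  move=> w; rewrite onE; case: (w =P u) => [->|_] /=; last by rewrite andbT.
  by rewrite on_geodE (negbTE hu) !andbF.
rewrite (bigD1 v) /=; last by rewrite nv onv.
rewrite [in RHS](bigD1 v) /=; last by rewrite nv onv.
rewrite (eq_bigr (Gf v l)); last first.
  move=> w /andP[/andP[_ hw] hwv]; apply: Gw => //.
  by apply: contraTneq hw => ->; rewrite on_geodE (negbTE hu).
have -> : Gf u l u = (\prod_(x | adj u x && (x != v)) d u x)%N.
  apply: eq_bigl => x; rewrite edE edu !xpair_eqE eqxx /= orbF.
  case: (x =P u) => [->|_]; first by rewrite Hirr.
  by rewrite /= orbF.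
have -> : Gf v l v = (d v u * Gf u l v)%N.
  rewrite /Gf (bigD1 u) /=; last by rewrite hvu edu'.
  congr (_ * _)%N; apply: eq_bigl => x; rewrite edE !xpair_eqE [v == u]eq_sym (negbTE huv') eqxx /= andbT.
  by case: (x == u); case: (edge_on adj v l v x); rewrite /= ?andbT ?andbF.
ring.
Qed.
End Ell.
Section More.
Variable V : finType.
Variable adj : rel V.
Hypothesis Hsym : symmetric adj.
Hypothesis Hirr : irreflexive adj.
Hypothesis Huniq : forall u v : V, exists! p, gpath adj u v p.
Variable d : V -> V -> nat.
Local Notation gp := (gp Huniq).

Lemma gpath_tail u v w p : gpath adj u v (w :: p) -> gpath adj w v p.
Proof.
case/and3P => hp hl hu; apply/and3P; split => //; [by case/andP: hp | by case/andP: hu].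
Qed.

Lemma leafA a b : adj a b -> exists l, leaf adj l && (gp b l == a :: gp a l).
Proof.
move=> hab; have hba : adj b a by rewrite Hsym.
pose P l := gp b l == a :: gp a l.
have Pa : P a by rewrite /P (gp_refl Huniq) (gpE Huniq (gpath_adj Hirr hba)).
case: (arg_maxnP (fun l => size (gp b l)) Pa) => y Py Hmax.
exists y; apply/andP; split; last exact: Py.
apply/negPn/negP => nly.
have hp := gpP Huniq b y; move: Py; rewrite /P => /eqP Ey.
move: hp; case/lastP E: (gp b y) => [|p' y']; first by rewrite Ey in E.
case/and3P; rewrite rcons_path last_rcons => /andP[_ hzy] /eqP hy' _.
subst y'; set z0 := last b p' in hzy.
case: (pickP (fun z => adj y z && (z != z0))) => [z /andP[hyz hz]|H]; last first.
  apply: (negP nly); rewrite /leaf /valency; apply/eqP.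
  rewrite (_ : [set x | adj y x] = [set z0]) ?cards1 //.
  apply/setP => x; rewrite !inE; case: (x =P z0) => [->|/eqP hx]; first by rewrite Hsym.
  by have := H x; rewrite hx andbT.
have zp : z \notin b :: gp b y.
  apply/negP => hzin; have [p1 [p2 [E2 h1 h2]]] := gpath_split (gpP Huniq b y) hzin.
  have hzy' : adj z y by rewrite Hsym.
  rewrite (gpath_uniq Huniq h2 (gpath_adj Hirr hzy')) cats1 E in E2.
  have E3 := @rcons_injl _ y _ _ E2; subst p1.
  by case/and3P: h1 => _ /eqP hl _; rewrite /z0 hl eqxx in hz.
have gz : gpath adj b z (rcons (gp b y) z).
  have /and3P[hp1 /eqP hl1 hu1] := gpP Huniq b y.
  rewrite /gpath rcons_path last_rcons eqxx hp1 hl1 hyz -rcons_cons rcons_uniq zp.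
  by rewrite hu1.
have Pz : P z.
  rewrite /P (gpE Huniq gz) Ey rcons_cons; apply/eqP; congr (_ :: _); symmetry.
  by apply: (gpE Huniq); apply: (gpath_tail (u:=b)); rewrite -rcons_cons -Ey.
have := Hmax z Pz; rewrite /= (gpE Huniq gz) size_rcons. by rewrite ltnn.
Qed.

Lemma ell_gt0 u v : (forall v x, node adj v -> adj v x -> 0 < d v x)%N ->
  (0 < ell adj d u v)%N.
Proof.
move=> hd; rewrite /ell big_seq_cond prodn_cond_gt0 // => w /andP[_ /andP[nw _]].
by rewrite big_seq_cond prodn_cond_gt0 // => x /andP[_ /andP[hx _]]; apply: hd.
Qed.

Lemma ell_refl b : node adj b -> ell adj d b b = (\prod_(x | adj b x) d b x)%N.
Proof.
move=> nb; rewrite /ell (big_pred1 b) /=; last first.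
  by move=> w; rewrite on_geodE (gp_refl Huniq) inE /= ?orbF; case: (w =P b) => [->|/eqP hw]; [rewrite nb ?eqxx | rewrite ?andbF /= ?(negbTE hw)].
apply: eq_bigl => x; by rewrite edge_onE (gp_refl Huniq) /= andbT.
Qed.
End More.

Unset Implicit Arguments.
Local Open Scope ring_scope.

Theorem lemma5p6 (R : realFieldType) (V : finType) (adj : rel V)
  (d : V -> V -> nat)
  (Hsd : splice_diagram adj d) (Hed : edge_det adj d)
  (a b : V) (Ha : node adj a) (Hb : node adj b) (Hab : adj a b) :
  let Pa := [set l | leaf adj l && on_geod adj l b a] in
  let Pb := [set l | leaf adj l && on_geod adj l a b] in
  [/\ bary adj d R a Pa = bary adj d R b Pa,
      bary adj d R a Pb = bary adj d R b Pb &
      exists ta tb : R,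
        [/\ 0 < ta, ta < tb, tb < 1,
            rho adj d R a =
               segpt (R:=R) ta (bary adj d R a Pa) (bary adj d R a Pb)
          & rho adj d R b =
               segpt (R:=R) tb (bary adj d R a Pa) (bary adj d R a Pb)]].
Proof.
case: Hsd => [[Hsym Hirr] Huniq _ _ Hd] Pa Pb.
have Hba : adj b a by rewrite Hsym.
pose inA l := gp Huniq b l == a :: gp Huniq a l.
have PaE l : (l \in Pa) = leaf adj l && inA l.
  rewrite inE; congr (_ && _); apply/idP/eqP => h.
    exact: (gp_adj Hsym Hirr Huniq Hab h).
  exact: (gp_adjE Hsym h).
have sz (s : seq V) x y : (s == x :: y :: s) = false.
  apply/negbTE/eqP => /(congr1 size) /= /eqP.
  by rewrite -[X in X == _]addn0 -addn2 eqn_add2l.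
have notA l : (gp Huniq a l == b :: gp Huniq b l) = ~~ inA l.
  rewrite /inA; case: (gp_dich Hsym Hirr Huniq l Hab) => h; rewrite h.
    by rewrite eqxx sz.
  by rewrite eqxx sz.
have PbE l : (l \in Pb) = leaf adj l && ~~ inA l.
  rewrite inE -notA; congr (_ && _); apply/idP/eqP => h.
    exact: (gp_adj Hsym Hirr Huniq Hba h).
  exact: (gp_adjE Hsym h).
pose A := (\prod_(x | adj a x && (x != b)) d a x)%N.
pose B := (\prod_(x | adj b x && (x != a)) d b x)%N.
have A0 : (0 < A)%N by rewrite prodn_cond_gt0 // => x /andP[hx _]; apply: Hd.
have B0 : (0 < B)%N by rewrite prodn_cond_gt0 // => x /andP[hx _]; apply: Hd.
have dab0 : (0 < d a b)%N by apply: Hd.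
have dba0 : (0 < d b a)%N by apply: Hd.
have stepA l : inA l -> (ell adj d b l * d a b = ell adj d a l * B)%N.
  by move=> /eqP h; apply: (ell_step Hsym Hirr d Hb Ha Hba h).
have stepB l : ~~ inA l -> (ell adj d a l * d b a = ell adj d b l * A)%N.
  by rewrite -notA => /eqP h; apply: (ell_step Hsym Hirr d Ha Hb Hab h).
have ellab : ell adj d a b = (A * B)%N.
  have h : gp Huniq a b = b :: gp Huniq b b.
    by rewrite gp_refl; apply: gpE; apply: gpath_adj.
  have := ell_step Hsym Hirr d Ha Hb Hab h.
  rewrite (ell_refl Huniq d Hb) (bigD1 a) //= -/B => E.
  apply/eqP; rewrite -(eqn_pmul2r dba0) E; apply/eqP; ring.
have edet : (A * B < d a b * d b a)%N by rewrite -ellab; apply: Hed.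
have La : leaf adj a = false by apply/negbTE.
have Lb : leaf adj b = false by apply/negbTE.
pose ea l : R := (ell adj d a l)%:R.
pose eb l : R := (ell adj d b l)%:R.
pose kA : R := B%:R / (d a b)%:R.
pose kB : R := (d b a)%:R / A%:R.
have dab0R : (d a b)%:R != 0 :> R by rewrite pnatr_eq0 -lt0n.
have dba0R : (d b a)%:R != 0 :> R by rewrite pnatr_eq0 -lt0n.
have A0R : A%:R != 0 :> R by rewrite pnatr_eq0 -lt0n.
have B0R : B%:R != 0 :> R by rewrite pnatr_eq0 -lt0n.
have kA0 : 0 < kA by rewrite divr_gt0 // ltr0n.
have kB0 : 0 < kB by rewrite divr_gt0 // ltr0n.
have kAB : kA < kB.
  rewrite -subr_gt0; have -> : kB - kA = ((d a b * d b a)%:R - (A * B)%:R) / (A%:R * (d a b)%:R) :> R.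
    by rewrite /kA /kB !natrM; field; rewrite dab0R A0R.
  by rewrite divr_gt0 ?mulr_gt0 ?ltr0n // subr_gt0 ltr_nat.
have ebA l : inA l -> eb l = ea l * kA.
  move=> /stepA /(congr1 (fun n => n%:R : R)); rewrite /= !natrM => E.
  by rewrite /eb /ea /kA mulrA -E; field.
have ebB l : ~~ inA l -> eb l = ea l * kB.
  move=> /stepB /(congr1 (fun n => n%:R : R)); rewrite /= !natrM => E.
  by rewrite /eb /ea /kB mulrA E; field.
have ea0 l : 0 < ea l by rewrite ltr0n; apply: ell_gt0.
pose SA := \sum_(l | leaf adj l && inA l) ea l.
pose SB := \sum_(l | leaf adj l && ~~ inA l) ea l.
have sumPa (f : V -> R) : \sum_(m in Pa | leaf adj m) f m = \sum_(l | leaf adj l && inA l) f l.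
  by apply: eq_bigl => m; rewrite PaE andbAC andbb.
have sumPb (f : V -> R) : \sum_(m in Pb | leaf adj m) f m = \sum_(l | leaf adj l && ~~ inA l) f l.
  by apply: eq_bigl => m; rewrite PbE andbAC andbb.
have SAb : \sum_(l | leaf adj l && inA l) eb l = SA * kA.
  by rewrite mulr_suml; apply: eq_bigr => l /andP[_ h]; apply: ebA.
have SBb : \sum_(l | leaf adj l && ~~ inA l) eb l = SB * kB.
  by rewrite mulr_suml; apply: eq_bigr => l /andP[_ h]; apply: ebB.
have SA0 : 0 < SA.
  have [l /andP[hl hA]] := leafA Hsym Hirr Huniq Hab.
  rewrite /SA (bigD1 l) /=; last by rewrite hl.
  have := ea0 l; have : 0 <= \sum_(i | (leaf adj i && inA i) && (i != l)) ea i.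
    by apply: sumr_ge0 => i _; apply: ltW.
  lra.
have SB0 : 0 < SB.
  have [l /andP[hl hA]] := leafA Hsym Hirr Huniq Hba.
  rewrite /SB (bigD1 l) /=; last by rewrite hl -notA.
  have := ea0 l; have : 0 <= \sum_(i | (leaf adj i && ~~ inA i) && (i != l)) ea i.
    by apply: sumr_ge0 => i _; apply: ltW.
  lra.
have nA : norm1 adj (wvec adj d R a) = SA + SB.
  rewrite /norm1 (bigID inA) /=; congr (_ + _); apply: eq_bigr => l /andP[hl _];
  by rewrite ffunE hl La ger0_norm ?ler0n.
have nB : norm1 adj (wvec adj d R b) = SA * kA + SB * kB.
  rewrite /norm1 (bigID inA) /= -SAb -SBb; congr (_ + _); apply: eq_bigr => l /andP[hl _];
  by rewrite ffunE hl Lb ger0_norm ?ler0n.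
have SA0' : SA != 0 by rewrite gt_eqF.
have SB0' : SB != 0 by rewrite gt_eqF.
have kA0' : kA != 0 by rewrite gt_eqF.
have kB0' : kB != 0 by rewrite gt_eqF.
have S0 : SA + SB != 0 by rewrite gt_eqF // addr_gt0.
have T0 : SA * kA + SB * kB != 0 by rewrite gt_eqF // addr_gt0 // mulr_gt0.
split.
- apply/ffunP => l; rewrite !ffunE !sumPa SAb.
  case: ifP => // /andP[]; rewrite PaE => /andP[_ h] _.
  rewrite -/(eb l) (ebA l h) -/SA; field; rewrite ?SA0' ?SB0' ?kA0' ?kB0' ?S0 ?T0 //.
- apply/ffunP => l; rewrite !ffunE !sumPb SBb.
  case: ifP => // /andP[]; rewrite PbE => /andP[_ h] _.
  rewrite -/(eb l) (ebB l h) -/SB; field; rewrite ?SA0' ?SB0' ?kA0' ?kB0' ?S0 ?T0 //.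
exists (SB / (SA + SB)), (SB * kB / (SA * kA + SB * kB)); split.
- by rewrite divr_gt0 // addr_gt0.
- rewrite -subr_gt0.
  have -> : SB * kB / (SA * kA + SB * kB) - SB / (SA + SB) =
     SA * SB * (kB - kA) / ((SA + SB) * (SA * kA + SB * kB)) by field; rewrite ?SA0' ?SB0' ?kA0' ?kB0' ?S0 ?T0 //.
  have h1 : 0 < kB - kA by rewrite subr_gt0.
  by apply: divr_gt0; apply: mulr_gt0 => //; [apply: mulr_gt0 | apply: addr_gt0 | apply: addr_gt0; apply: mulr_gt0].
- have h2 : 0 < SA * kA by apply: mulr_gt0.
  have h3 : 0 < SB * kB by apply: mulr_gt0.
  rewrite ltr_pdivrMr; last by apply: addr_gt0.
  lra.
- apply/ffunP => l; rewrite /rho ffunE nA !ffunE !sumPa !sumPb -/SA -/SB PaE PbE La.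
  case: (leaf adj l) => /=; last by rewrite mul0r !mulr0 addr0.
  case: (inA l) => /=; field; rewrite ?SA0' ?SB0' ?kA0' ?kB0' ?S0 ?T0 //.
- apply/ffunP => l; rewrite /rho ffunE nB !ffunE !sumPa !sumPb -/SA -/SB PaE PbE Lb.
  case: (leaf adj l) => /=; last by rewrite mul0r !mulr0 addr0.
  case h: (inA l) => /=.
    rewrite -/(eb l) (ebA l); [field; rewrite ?SA0' ?SB0' ?kA0' ?kB0' ?S0 ?T0 // | by rewrite h].
  rewrite -/(eb l) (ebB l); [field; rewrite ?SA0' ?SB0' ?kA0' ?kB0' ?S0 ?T0 // | by rewrite h].
Qed.
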